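(* Let $p$ be a prime, $k \geq 3$ an integer, $N = p^{2k}$, and let $d$ be odd. In the coefficient-choosing game of degree $d$ over $\mathbb{Z}/N\mathbb{Z}$, Wanda has a winning strategy (whether she moves first or second).
   Context: The coefficient-choosing game of degree $d$ over $R = \mathbb{Z}/N\mathbb{Z}$: Nora and Wanda alternately choose coefficients of $f(x) = a_d x^d + \cdots + a_0$; on each move the current player picks a not-yet-chosen coefficient and assigns it a value in $R$, subject to $a_d \neq 0$, $a_0 \neq 0$. After all $d+1$ coefficients are chosen, Wanda wins if $f$ has a root in $R$, and Nora wins otherwise. *)

(* Defs.v *)
From HB Require Import structures.
From mathcomp Require Import all_boot all_order all_algebra.
Set Implicit Arguments. Unset Strict Implicit. Unset Printing Implicit Defensive.
Import GRing.Theory.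
Local Open Scope ring_scope.

(* A position of the coefficient-choosing game of degree d over Z/NZ:
   s i = Some a  means coefficient a_i has been chosen with value a,
   s i = None    means a_i is not yet chosen.  (Requires 1 < N.) *)
Definition position (N d : nat) := {ffun 'I_d.+1 -> option 'Z_N}.

Definition empty_pos (N d : nat) : position N d := [ffun _ => None].

Definition legal_move (N d : nat) (s : position N d) (i : 'I_d.+1) (v : 'Z_N) : Prop :=
  s i = None /\ ((nat_of_ord i == 0)%N || (nat_of_ord i == d) -> v != 0).

Definition play (N d : nat) (s : position N d) (i : 'I_d.+1) (v : 'Z_N) : position N d :=
  [ffun j => if j == i then Some v else s j].

Definition pos_poly (N d : nat) (s : position N d) : {poly 'Z_N} :=
  \poly_(i < d.+1) odflt 0 (s (inord i)).

Fixpoint wwins (N d : nat) (n : nat) (wturn : bool) (s : position N d) : Prop :=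
  match n with
  | 0%N => exists x : 'Z_N, root (pos_poly s) x
  | n'.+1 =>
      if wturn then exists i v, legal_move s i v /\ wwins n' false (play s i v)
      else forall i v, legal_move s i v -> wwins n' true (play s i v)
  end.

Definition wanda_wins (N d : nat) (wanda_first : bool) : Prop :=
  wwins d.+1 wanda_first (empty_pos N d).

(* Main.v *)
Require Import Defs.
From HB Require Import structures.
From mathcomp Require Import all_boot all_order all_algebra zify ring.
Set Implicit Arguments. Unset Strict Implicit. Unset Printing Implicit Defensive.
Import GRing.Theory.
Local Open Scope ring_scope.

Section Generic.
Variables N d : nat.
Implicit Types (s t : position N d).

Definition free s := #|[pred i | s i == None]|.
Definition ext s t := forall i v, s i = Some v -> t i = Some v.

Lemma free_play s i v : s i = None -> free s = (free (play s i v)).+1.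
Proof.
move=> si; rewrite /free (cardD1 i) inE si eqxx add1n; congr _.+1.
apply: eq_card => j; rewrite !inE ffunE; case: eqP => [->|]; by rewrite ?eqxx.
Qed.

Lemma ext_play s i v : s i = None -> forall t, ext (play s i v) t -> ext s t.
Proof.
move=> si t H j w sj; apply: H; rewrite ffunE; case: eqP => [E|//].
by move: sj; rewrite E si.
Qed.

Lemma horner_pos s x : (pos_poly s).[x] = \sum_(i < d.+1) odflt 0 (s i) * x ^+ i.
Proof. by rewrite horner_poly; apply: eq_bigr => i _; rewrite inord_val. Qed.

Lemma horner_play s j v x : s j = None ->
  (pos_poly (play s j v)).[x] = (pos_poly s).[x] + v * x ^+ j.
Proof.
move=> sj; rewrite !horner_pos (bigD1 j) //= [in RHS](bigD1 j) //= ffunE eqxx sj /=.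
rewrite mul0r add0r addrC; congr (_ + _); apply: eq_bigr => i /negbTE ne.
by rewrite ffunE ne.
Qed.

Lemma horner_empty x : (pos_poly (empty_pos N d)).[x] = 0.
Proof. by rewrite horner_pos big1 // => i _; rewrite ffunE mul0r. Qed.

Lemma horner_trunc s x m : x ^+ m = 0 -> (m <= d.+1)%N ->
  (pos_poly s).[x] = \sum_(i < m) odflt 0 (s (inord i)) * x ^+ i.
Proof.
move=> xm md; rewrite horner_poly.
rewrite -(big_mkord xpredT (fun i => odflt 0 (s (inord i)) * x ^+ i)).
rewrite (@big_cat_nat _ _ _ m 0 d.+1 _ _ (leq0n m) md) /= big_mkord.
rewrite [X in _ + X]big1_seq ?addr0 // => i /andP [_].
rewrite mem_index_iota => /andP [mi _].
by rewrite -(subnKC mi) exprD xm mul0r mulr0.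
Qed.

Lemma cert_wins n b s : free s = n -> (forall t, ext s t -> exists x, root (pos_poly t) x) ->
  wwins n b s.
Proof.
elim: n b s => [|n IH] b s fs C /=; first by apply: C.
case: b.
  have: (0 < free s)%N by rewrite fs.
  rewrite /free => /card_gt0P [i]; rewrite inE => /eqP si.
  exists i, 1; split; first by split => //; rewrite oner_eq0.
  apply: IH; first by move: fs; rewrite (free_play 1 si) => -[].
  by move=> t /(ext_play si); apply: C.
move=> i v [si _]; apply: IH; first by move: fs; rewrite (free_play v si) => -[].
by move=> t /(ext_play si); apply: C.
Qed.


Lemma final_win s j v x : free s = 1%N -> s j = None ->
  ((nat_of_ord j == 0)%N || (nat_of_ord j == d) -> v != 0) ->
  (pos_poly s).[x] + v * x ^+ j = 0 -> wwins 1 true s.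
Proof.
move=> _ sj lg r; exists j, v; split => //=; exists x.
by rewrite /root horner_play // r.
Qed.

Hypothesis d_gt0 : (0 < d)%N.
Definition ex s : nat := ((s ord0 == None) + (s ord_max == None))%N.

Lemma ord_max_neq0 : (ord_max != ord0 :> 'I_d.+1).
Proof. by apply/eqP => /(congr1 val) /= d0; move: d_gt0; rewrite d0. Qed.

Lemma ex_play_le s i v : (ex (play s i v) <= ex s)%N.
Proof.
rewrite /ex !ffunE.
case: (ord0 == i); case: (ord_max == i); case: (s ord0 == None); by case: (s ord_max == None).
Qed.

Lemma ex_play_fill s i v : s i = None -> (i == ord0) || (i == ord_max) ->
  (ex (play s i v)).+1 = ex s.
Proof.
move=> si /orP [] /eqP E; rewrite E in si *; rewrite /ex !ffunE eqxx /=.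
  by rewrite (negbTE ord_max_neq0) si /= add0n add1n.
have h := ord_max_neq0; rewrite eq_sym in h.
by rewrite (negbTE h) si /= addn0 addn1.
Qed.

Lemma A_inv n s : free s = n ->
  (if odd n then (2 * ex s <= n.-1)%N else (2 * ex s + 2 <= n)%N) ->
  wwins n (odd n) s.
Proof.
elim: n s => [|n IH] s fs /=; first by rewrite addn2.
case On: (odd n) => /= He.
  move=> i v [si _]; rewrite -On; apply: IH; first by move: fs; rewrite (free_play v si) => -[].
  rewrite On; have := ex_play_le s i v; move: He; clear; lia.
case: n On IH fs He => [|n] On IH fs He.
  have: (0 < free s)%N by rewrite fs.
  rewrite /free => /card_gt0P [j]; rewrite inE => /eqP sj.
  apply: (@final_win s j (- (pos_poly s).[1]) 1) => //; last by rewrite expr1n mulr1 addrN.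
  move: He; rewrite leqn0 muln_eq0 /= /ex addn_eq0 => /andP [h0 hm].
  move=> /orP [] /eqP jv.
    have ej : j = ord0 by apply: val_inj.
    by move: h0; rewrite -ej sj.
  have ej : j = ord_max by apply: val_inj.
  by move: hm; rewrite -ej sj.
have Hmove : forall i, s i = None -> ((i == ord0) || (i == ord_max)) || (ex s == 0%N) ->
    wwins n.+2 true s.
  move=> i si hi; rewrite /=; exists i, 1; split; first by split => //; rewrite oner_eq0.
  have := IH (play s i 1); rewrite On => IH'; apply: IH'.
    by move: fs; rewrite (free_play 1 si) => -[].
  case/orP: hi => [hi|/eqP e0].
    have := ex_play_fill 1 si hi; move: He => /=; clear; lia.
  have hn : (0 < n)%N by move: On; case: (n).
  have := ex_play_le s i 1; rewrite e0; move: hn; clear; lia.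
case E0: (s ord0) => [a|]; last by apply: (Hmove ord0) => //; rewrite eqxx.
case Em: (s ord_max) => [a'|]; last by apply: (Hmove ord_max) => //; rewrite eqxx orbT.
have: (0 < free s)%N by rewrite fs.
rewrite /free => /card_gt0P [j]; rewrite inE => /eqP sj.
by apply: (Hmove j) => //; rewrite /ex E0 Em /= orbT.
Qed.

End Generic.
Section NT.
Variables p k : nat.
Hypothesis pp : prime p.
Hypothesis k3 : (3 <= k)%N.
Local Notation N := (p ^ (2 * k))%N.

Lemma p_gt1 : (1 < p)%N. Proof. exact: prime_gt1. Qed.
Lemma N_gt1 : (1 < N)%N.
Proof. by rewrite -(expn0 p) ltn_exp2l ?p_gt1 //; lia. Qed.

Lemma natZ0 n : (N %| n)%N -> (n%:R : 'Z_N) = 0.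
Proof. by move/dvdnP => [m ->]; rewrite natrM pchar_Zp ?N_gt1 // mulr0. Qed.

Lemma natZ_neq0 n : (0 < n < N)%N -> (n%:R : 'Z_N) != 0.
Proof.
move=> /andP [n0 nN]; apply/eqP => /(congr1 (@nat_of_ord _)); rewrite val_Zp_nat ?N_gt1 //.
by rewrite modn_small //= => E; move: n0; rewrite E.
Qed.

Lemma P_neq0 : ((p ^ (2 * k - 2))%:R : 'Z_N) != 0.
Proof.
apply: natZ_neq0; rewrite expn_gt0 prime_gt0 //= ltn_exp2l ?p_gt1 //; lia.
Qed.

Lemma six_neq0 : (6%:R : 'Z_N) != 0.
Proof.
apply: natZ_neq0 => /=; apply: (@leq_trans (2 ^ 6)) => //.
apply: (@leq_trans (p ^ 6)); first by rewrite leq_exp2r // p_gt1.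
by rewrite leq_exp2l ?p_gt1 //; lia.
Qed.

Lemma bez c : ~~ (p ^ (k - 1) %| c)%N -> exists y, (p ^ k %| c * y + p ^ (k - 2))%N.
Proof.
move=> nd; have pk0 : (0 < p ^ k)%N by rewrite expn_gt0 prime_gt0.
have [a _ ha] := @Bezoutl (p ^ k) c pk0.
set g := gcdn (p ^ k) c in ha.
have [t tk gE] : exists2 t, (t <= k)%N & g = (p ^ t)%N by apply/dvdn_pfactor => //; apply: dvdn_gcdl.
have tk2 : (t <= k - 2)%N.
  rewrite leqNgt; apply: contra nd => tk2.
  apply: (@dvdn_trans g); last exact: dvdn_gcdr.
  by rewrite gE dvdn_exp2l //; lia.
have gd : (g %| p ^ (k - 2))%N by rewrite gE dvdn_exp2l.
exists (a * (p ^ (k - 2) %/ g))%N.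
have -> : (c * (a * (p ^ (k - 2) %/ g)) + p ^ (k - 2) = (g + a * c) * (p ^ (k - 2) %/ g))%N.
  set q := (p ^ (k - 2) %/ g)%N.
  have Xq : (p ^ (k - 2) = g * q)%N by rewrite mulnC divnK.
  rewrite [in X in (_ + X)%N]Xq; nia.
exact: dvdn_mulr.
Qed.

Lemma inord0' n : (inord 0 : 'I_n.+1) = ord0.
Proof. by apply: val_inj; rewrite /= inordK. Qed.

Lemma free_empty d : free (empty_pos N d) = d.+1.
Proof.
rewrite /free -[in RHS](card_ord d.+1); apply: eq_card => i; by rewrite !inE ffunE.
Qed.

Local Notation P := ((p ^ (2 * k - 2))%:R : 'Z_N).

Lemma P2_0 : P ^+ 2 = 0.
Proof. by rewrite -natrX -expnM natZ0 // dvdn_exp2l //; lia. Qed.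

Lemma rootA d (t : position N d) : (1 <= d)%N -> t ord0 = Some P -> t (inord 1) = Some 1 ->
  exists x, root (pos_poly t) x.
Proof.
move=> d1 t0 t1; exists (- P); apply/eqP.
rewrite (horner_trunc _ (m := 2)) ?sqrrN ?P2_0 // ?ltnS //.
rewrite !big_ord_recl big_ord0 /= /bump /= inord0' t0 t1 /=.
by rewrite expr0 expr1 mulr1 mul1r addr0 addrN.
Qed.

Lemma rootB d (t : position N d) (c : 'Z_N) : (2 <= d)%N -> t ord0 = Some P -> t (inord 1) = Some c ->
  t (inord 2) = Some (-1 - ((c : nat) %/ p ^ (k - 1))%:R) ->
  exists x, root (pos_poly t) x.
Proof.
move=> d2 t0 t1 t2.
have Pe : P = ((p ^ (k - 1))%:R) ^+ 2 by rewrite -natrX -expnM; congr (_ ^ _)%:R; lia.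
case: (boolP (p ^ (k - 1) %| c)%N) => hc.
  exists (p ^ (k - 1))%:R; apply/eqP.
  rewrite (horner_trunc _ (m := 3)) ?ltnS //; last first.
    by rewrite -natrX -expnM natZ0 // dvdn_exp2l //; lia.
  rewrite !big_ord_recl big_ord0 /= /bump /= inord0' t0 t1 t2 /=.
  rewrite Pe; set q := ((c : nat) %/ _)%:R; set x := (p ^ (k - 1))%:R.
  have ce : c = q * x by rewrite /q /x -natrM divnK // natr_Zp.
  rewrite {1}ce expr0 expr1 (_ : (1 + (1 + 0))%N = 2) //; ring.
have [y hy] := bez hc.
exists ((p ^ k * y)%:R); apply/eqP.
rewrite (horner_trunc _ (m := 2)) ?ltnS ?(leq_trans _ d2) //; last first.
  by rewrite -natrX natZ0 // expnMn -expnM mulnC dvdn_mulr.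
rewrite !big_ord_recl big_ord0 /= /bump /= inord0' t0 t1 /=.
rewrite expr0 expr1 mulr1 addr0 -{1}(natr_Zp c) -natrM -natrD natZ0 //.
have -> : (p ^ (2 * k - 2) + c * (p ^ k * y) = p ^ k * (c * y + p ^ (k - 2)))%N.
  rewrite mulnDr -expnD (_ : (k + (k - 2) = 2 * k - 2)%N); last by lia.
  by rewrite mulnCA addnC.
have H : (p ^ k * p ^ k %| p ^ k * (c * y + p ^ (k - 2)))%N by rewrite dvdn_pmul2l // expn_gt0 prime_gt0.
by move: H; rewrite -expnD (_ : (k + k = 2 * k)%N) //; lia.
Qed.

Lemma caseB3 d : (3 <= d)%N -> wwins d.+1 true (empty_pos N d).
Proof.
case: d => [|[|[|d]]] // _ /=.
exists ord0, P; split; first by split; [rewrite ffunE | move=> _; exact: P_neq0].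
move=> i c [si _].
set s1 := play _ _ _ in si *; set s2 := play s1 i c.
have i0 : i != ord0 by apply/eqP => E; move: si; rewrite E /s1 ffunE eqxx.
have fs2 : free s2 = d.+2.
  have := free_empty d.+3; rewrite (@free_play _ _ _ ord0 P) ?ffunE //.
  by rewrite (@free_play _ _ s1 i c si) => -[] [].
have s20 : s2 ord0 = Some P by rewrite /s2 /s1 !ffunE eq_sym (negbTE i0) eqxx.
have n12 : (inord 1 : 'I_d.+4) != inord 2.
  by apply/eqP => /(congr1 (@nat_of_ord _)); rewrite !inordK.
have n10 : (inord 1 : 'I_d.+4) != ord0.
  by apply/eqP => /(congr1 (@nat_of_ord _)); rewrite !inordK.
have n20 : (inord 2 : 'I_d.+4) != ord0.
  by apply/eqP => /(congr1 (@nat_of_ord _)); rewrite !inordK.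
case: (eqVneq i (inord 1)) => [ei|ni].
  pose w : 'Z_N := (-1 - ((c : nat) %/ p ^ (k - 1))%:R).
  have s22 : s2 (inord 2) = None.
    by rewrite /s2 /s1 !ffunE ei eq_sym (negbTE n12) (negbTE n20).
  exists (inord 2), w; split; first by split => //; rewrite inordK.
  apply: (@cert_wins _ _ d.+1 false); first by move: fs2; rewrite (free_play w s22) => -[].
  move=> t ht; apply: (@rootB _ _ c) => //; apply: ht; rewrite ffunE.
  - by rewrite eq_sym (negbTE n20).
  - by rewrite (negbTE n12) /s2 ffunE ei eqxx.
  - by rewrite eqxx.
have s21 : s2 (inord 1) = None.
  by rewrite /s2 /s1 !ffunE eq_sym (negbTE ni) (negbTE n10).
exists (inord 1), 1; split; first by split => //; rewrite inordK.
apply: (@cert_wins _ _ d.+1 false); first by move: fs2; rewrite (free_play 1 s21) => -[].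
move=> t ht; apply: rootA => //; apply: ht; rewrite ffunE.
- by rewrite eq_sym (negbTE n10).
- by rewrite eqxx.
Qed.

Lemma ex_empty d : (0 < d)%N -> ex (empty_pos N d) = 2%N.
Proof. by move=> d0; rewrite /ex !ffunE. Qed.

Lemma caseB1 : wwins 2 true (empty_pos N 1).
Proof.
rewrite /=; exists ord_max, 1; split; first by split; [rewrite ffunE | rewrite oner_eq0].
move=> i c [si _]; exists (- c).
have i0 : i = ord0.
  apply: val_inj => /=; move: si; rewrite ffunE; case: eqP => // /eqP.
  case: i => [[|[|]]] //= _ /eqP; by rewrite -(inj_eq val_inj).
rewrite /root horner_play // horner_play ?ffunE // horner_empty i0 /=.
by rewrite expr0 expr1 mulr1 mul1r add0r addNr.
Qed.

Lemma caseA1 : wwins 2 false (empty_pos N 1).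
Proof.
rewrite /=; move=> i c [si hc].
have c0 : c != 0 by apply: hc; case: i {si} => [[|[|]]].
have fs1 : free (play (empty_pos N 1) i c) = 1%N.
  by have := free_empty 1; rewrite (free_play c si) => -[].
have: (0 < free (play (empty_pos N 1) i c))%N by rewrite fs1.
rewrite /free => /card_gt0P [j]; rewrite inE => /eqP sj.
exists j, (- c); split; first by split => //; rewrite oppr_eq0.
exists 1; rewrite /root horner_play // horner_play // horner_empty.
by rewrite !expr1n !mulr1 add0r addrN.
Qed.

Lemma caseA5 d : (5 <= d)%N -> odd d -> wwins d.+1 false (empty_pos N d).
Proof.
move=> d5 od; have d0 : (0 < d)%N by lia.
have := @A_inv _ d d0 d.+1 (empty_pos _ d) (free_empty d); rewrite /= od /=; apply.
by rewrite ex_empty //; lia.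
Qed.

Lemma caseA3 : wwins 4 false (empty_pos N 3).
Proof.
move=> /= i c [si hc].
have fs1 : free (play (empty_pos N 3) i c) = 3%N.
  by have := free_empty 3; rewrite (free_play c si) => -[].
have mx0 := @ord_max_neq0 3 erefl.
case: (boolP ((i == ord0) || (i == ord_max))) => hi.
  apply: (@A_inv _ 3 erefl 3) => //=.
  have := @ex_play_fill N 3 erefl _ _ c si hi; rewrite ex_empty //; lia.
have [ni0 nim] : i != ord0 /\ i != ord_max by move: hi; rewrite negb_or => /andP.
set s1 := play _ i c in fs1 *.
have s1m : s1 ord_max = None by rewrite /s1 !ffunE eq_sym (negbTE nim).
exists ord_max, 1; split; first by split => //; rewrite oner_eq0.
move=> i3 c3 [si3 _].
set s2 := play s1 ord_max 1 in si3 *; set s3 := play s2 i3 c3.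
have fs3 : free s3 = 1%N.
  by move: fs1; rewrite (free_play 1 s1m) (free_play c3 si3) => -[].
have n3m : i3 != ord_max by apply/eqP => E; move: si3; rewrite E /s2 ffunE eqxx.
case: (eqVneq i3 ord0) => [e3|n30].
  apply: (@A_inv _ 3 erefl 1) => //=.
  by rewrite /ex /s3 /s2 /s1 !ffunE e3 eqxx /=.
have s30 : s3 ord0 = None.
  by rewrite /s3 /s2 /s1 !ffunE !(eq_sym ord0) (negbTE n30) (negbTE mx0) (negbTE ni0).
have s3m : s3 ord_max = Some 1 by rewrite /s3 /s2 !ffunE eq_sym (negbTE n3m) eqxx.
set a1 := odflt 0 (s3 (inord 1)); set a2 := odflt 0 (s3 (inord 2)).
have key : forall x, (pos_poly s3).[x] = a1 * x + a2 * x ^+ 2 + x ^+ 3.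
  move=> x; rewrite horner_poly !big_ord_recl big_ord0 /= /bump /= inord0' s30.
  have -> : (inord 3 : 'I_4) = ord_max by apply: val_inj; rewrite /= inordK.
  rewrite s3m /= -/a1 -/a2; ring.
have h6 : (pos_poly s3).[2] - 3%:R * (pos_poly s3).[1] - (pos_poly s3).[-1] = 6%:R.
  by rewrite !key; ring.
have [x hx] : exists x, (pos_poly s3).[x] != 0.
  case: (eqVneq (pos_poly s3).[1] 0) => [h1|]; last by exists 1.
  case: (eqVneq (pos_poly s3).[-1] 0) => [h2|]; last by exists (-1).
  case: (eqVneq (pos_poly s3).[2] 0) => [h3|]; last by exists 2.
  by move: h6; rewrite h1 h2 h3 mulr0 !subr0 => /esym /eqP; rewrite (negbTE six_neq0).
apply: (@final_win _ _ s3 ord0 (- (pos_poly s3).[x]) x) => //.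
  by move=> _; rewrite oppr_eq0.
by rewrite expr0 mulr1 addrN.
Qed.
End NT.

Local Close Scope ring_scope.

Theorem lemma7 (p k d : nat) :
  prime p -> (3 <= k)%N -> odd d ->
  forall wanda_first : bool, wanda_wins (p ^ (2 * k)) d wanda_first.
Proof.
move=> pp k3 od [|]; rewrite /wanda_wins.
  case: d od => [|[|d]] //= od; first exact: caseB1.
  by apply: caseB3 => //; case: d od.
case: d od => [|[|[|[|[|d]]]]] //= od.
- exact: caseA1.
- exact: caseA3.
- by apply: caseA5.
Qed.
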